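(* Let $T\subset V$ be an open cone with basepoint $b\in T$, let $p\in\partial T\setminus[0]_T$, let $z\in T$, and put $y_\lambda:=(1-\lambda)p+\lambda z$ for $\lambda\in(0,1)$. Then $\lim_{\lambda\to0}r_{T,p}(y_\lambda)=-RF_T(b,p)$.
   Context: $V$ is a finite-dimensional real vector space. An open cone is a nonempty open convex set $T\subset V$ with $\lambda T\subseteq T$ for all $\lambda>0$ and $0\notin T$; $\partial T$ its boundary. Write $x\le_T y$ iff $y-x\in\overline T$, $[0]_T:=\overline T\cap(-\overline T)$. $M_T(y/x):=\inf\{\lambda>0:y\le_T\lambda x\}$ for $y\in V$, $x\in T$; the reverse Funk function is $RF_T(x,y):=\log M_T(y/x)$ for $x\in T$, $y\in V$. For $p\in\partial T\setminus[0]_T$, $r_{T,p}(x):=RF_T(x,p)-RF_T(b,p)$, $x\in T$. *)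

(* Defs.v *)
From HB Require Import structures.
From mathcomp Require Import all_boot all_order all_algebra.
From mathcomp Require Import all_classical all_reals all_analysis.
Set Implicit Arguments. Unset Strict Implicit. Unset Printing Implicit Defensive.
Import Order.TTheory GRing.Theory Num.Theory.
Import numFieldNormedType.Exports.
Local Open Scope classical_set_scope.
Local Open Scope ring_scope.

Section Cones.
Context {R : realType} {n : nat}.
Local Notation V := 'rV[R]_n.

Definition open_cone (T : set V) : Prop :=
  [/\ T !=set0, open T,
      (forall x y (t : R), T x -> T y -> 0 <= t -> t <= 1 -> T (t *: x + (1 - t) *: y)),
      (forall (l : R) x, 0 < l -> T x -> T (l *: x)) & ~ T 0].

Definition cone_boundary (T : set V) : set V := closure T `\` interior T.

Definition cone_le (T : set V) (x y : V) : Prop := closure T (y - x).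

Definition cone_zero (T : set V) : set V :=
  [set v | closure T v /\ closure T (- v)].

Definition M_T (T : set V) (y x : V) : R :=
  inf [set l : R | 0 < l /\ cone_le T y (l *: x)].

Definition RF (T : set V) (x y : V) : R := ln (M_T T y x).

Definition r_Tp (T : set V) (b p : V) (x : V) : R := RF T x p - RF T b p.

End Cones.

(* Main.v *)
Require Import Defs.
From HB Require Import structures.
From mathcomp Require Import all_boot all_order all_algebra.
From mathcomp Require Import all_classical all_reals all_analysis.
From mathcomp Require Import ring lra.
Import Order.TTheory GRing.Theory Num.Theory.
Import numFieldNormedType.Exports.
Local Open Scope classical_set_scope.
Local Open Scope ring_scope.

Lemma from_nbhs (R : realType) (P : R -> Prop) : (\forall x \near 0, P x) -> \forall x \near 0^'+, P x.
Proof. move=> h. by apply: cvg_within h. Qed.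
Lemma fc (R : realType) n (p z : 'rV[R]_n) e : (fun l : R => e *: ((1 - l) *: p + l *: z) - p) @ 0 --> (e *: ((1 - 0) *: p + 0 *: z) - p).
Proof.
apply: cvgB; last exact: cvg_cst.
apply: cvgZ; first exact: cvg_cst.
apply: cvgD; apply: cvgZ => //; try exact: cvg_cst.
apply: cvgB; [exact: cvg_cst|exact: cvg_id].
Qed.

Section S.
Context {R : realType} {n : nat}.
Local Notation V := 'rV[R]_n.

Lemma closure_map (f : V -> V) (A : set V) :
  continuous f -> (forall a, A a -> closure A (f a)) ->
  forall x, closure A x -> closure A (f x).
Proof.
move=> fc fAB x Ax.
apply: (closed_closure (A := A)) => N /(fc x) Nf.
have [a [Aa Na]] := Ax _ Nf.
by exists (f a); split => //; apply: fAB.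
Qed.

Lemma addc_cont (c : V) : continuous (fun x : V => x + c).
Proof. by move=> x; apply: (cvgD cvg_id (cvg_cst c)). Qed.
Lemma caddc_cont (c : V) : continuous (fun x : V => c + x).
Proof. have -> : (fun x : V => c + x) = (fun x => x + c) by apply/funext => y; rewrite addrC. exact: addc_cont. Qed.
Lemma scale_cont (t : R) : continuous (fun x : V => t *: x).
Proof. by move=> x; apply: (cvgZ (cvg_cst t) cvg_id). Qed.

Variable T : set V.
Hypothesis hT : open_cone T.

Lemma T_add x y : T x -> T y -> T (x + y).
Proof.
case: hT => _ _ cv sc _ Tx Ty.
have h2 : (0:R) < 2 by [].
have hh : 0 <= (2:R)^-1 by rewrite invr_ge0 ltW.
have hh1 : (2:R)^-1 <= 1 by rewrite invf_le1 // ler1n.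
have := sc 2 _ h2 (cv x y (2^-1) Tx Ty hh hh1).
have -> : 1 - (2:R)^-1 = 2^-1.
  by field.
by rewrite scalerDr !scalerA mulfV ?pnatr_eq0 // !scale1r.
Qed.

Lemma clT_scale t x : 0 < t -> closure T x -> closure T (t *: x).
Proof.
move=> t0; apply: closure_map; first exact: scale_cont.
case: hT => _ _ _ sc _ a Ta; apply: subset_closure; exact: sc.
Qed.

Lemma clT_addT x c : T c -> closure T x -> closure T (x + c).
Proof.
move=> Tc Tx; apply: ((@closure_map (fun y => y + c) T)) Tx; first exact: addc_cont.
by move=> a Ta; apply: subset_closure; apply: T_add.
Qed.

Lemma clT_add x c : closure T x -> closure T c -> closure T (x + c).
Proof.
move=> Tx Tc; apply: ((@closure_map (fun y => x + y) T)) Tc; first exact: caddc_cont.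
by move=> a Ta; exact: clT_addT.
Qed.

End S.

Theorem mainTheorem19 (R : realType) (n : nat) (T : set 'rV[R]_n) (b p z : 'rV[R]_n) :
  open_cone T -> T b ->
  cone_boundary T p -> ~ cone_zero T p ->
  T z ->
  (fun l : R => r_Tp T b p ((1 - l) *: p + l *: z)) @ 0^'+ --> - RF T b p.
Proof.
move=> hT Tb [clp _] nz Tz.
have sc : forall (l : R) x, 0 < l -> T x -> T (l *: x) by case: hT.
pose y (l : R) := (1 - l) *: p + l *: z.
pose E (l : R) := [set m : R | 0 < m /\ closure T (m *: y l - p)].
have ME l : M_T T p (y l) = inf (E l) by [].
have cly l : 0 < l < 1 -> closure T (y l).
  case/andP=> l0 l1; rewrite /y; have := @clT_add R n T hT ((1 - l) *: p) (l *: z); apply.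
    by apply: (@clT_scale R n T hT) => //; lra.
  exact/subset_closure/sc.
have inE l : 0 < l < 1 -> E l (1 - l)^-1.
  case/andP=> l0 l1; split; first by rewrite invr_gt0; lra.
  rewrite /y scalerDr !scalerA mulVf; last by lra.
  rewrite scale1r addrAC subrr add0r; apply/subset_closure/sc => //.
  by apply: mulr_gt0 => //; rewrite invr_gt0; lra.
have upper l : 0 < l < 1 -> inf (E l) <= (1 - l)^-1.
  move=> hl; apply: ge_inf; last exact: inE.
  by exists 0 => m [m0 _]; exact: ltW.
have lower l eps : 0 < l < 1 -> ~ closure T ((1 - eps) *: y l - p) -> 1 - eps <= inf (E l).
  move=> hl nc; apply: lb_le_inf; first by exists (1 - l)^-1; exact: inE.
  move=> m [m0 cm]; rewrite leNgt; apply/negP => mlt; apply: nc.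
  have -> : (1 - eps) *: y l - p = (m *: y l - p) + (1 - eps - m) *: y l.
    by rewrite addrAC -scalerDl addrCA subrr addr0.
  by apply: (@clT_add R n T hT) => //; apply: (@clT_scale R n T hT) => //; [lra | exact: cly].
have nearnc eps : 0 < eps -> \forall l \near 0^'+, ~ closure T ((1 - eps) *: y l - p).
  move=> e0; apply: from_nbhs.
  have f0 : ~ closure T ((1 - eps) *: y 0 - p).
    rewrite /y subr0 scale1r scale0r addr0 scalerBl scale1r addrAC subrr add0r => h.
    apply: nz; split => //.
    have := @clT_scale R n T hT eps^-1 _ _ h; rewrite scalerN scalerA mulVf; last by lra.
    by rewrite scale1r; apply; rewrite invr_gt0.
  have op : open (~` closure T) by apply: closed_openC; exact: closed_closure.
  exact: (@fc R n p z (1 - eps) _ (open_nbhs_nbhs (conj op f0))).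
have hM : (fun l => M_T T p (y l)) @ 0^'+ --> (1:R).
  apply/cvgrPdist_le => eps e0.
  near=> l.
  have l0 : 0 < l by near: l; exact: nbhs_right_gt.
  have lt : l < eps / (1 + eps) by near: l; apply: nbhs_right_lt; apply: divr_gt0; lra.
  have l1 : l < 1.
    apply: (lt_trans lt); rewrite ltr_pdivrMr; lra.
  have hl : 0 < l < 1 by rewrite l0 l1.
  have nc : ~ closure T ((1 - eps) *: y l - p) by near: l; exact: nearnc.
  rewrite ME; have lo := lower _ _ hl nc; have up := upper _ hl.
  have up2 : (1 - l)^-1 <= 1 + eps.
    rewrite ltr_pdivlMr in lt; last lra.
    rewrite -div1r ler_pdivrMr; [nra | lra].
  rewrite ler_norml; apply/andP; split; lra.
have -> : - RF T b p = ln 1 - RF T b p by rewrite ln1 sub0r.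
apply: cvgB; last exact: cvg_cst.
exact: (continuous_cvg _ (continuous_ln ltr01) hM).
Unshelve. all: by end_near.
Qed.
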